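(* Let $\lambda_1\ge\lambda_2\ge\dots>0$ with $\lambda_m\to0$, and for $\delta>0$, $d\in\mathbb N$ let $i_d(\delta^2)=\min\{i\in\mathbb N:\lambda_i\lambda_{i+1}\cdots\lambda_{i+d-1}\le\delta^2\}$. Let $n^{\rm ent}(\delta,1)=\#\{m\in\mathbb N:\lambda_m>\delta^2\}$ and $n^{\rm asy}(\epsilon,d)=\#\{k\in\mathbb N^d:k_1<k_2<\dots<k_d,\ \prod_{l=1}^d\lambda_{k_l}>\epsilon^2\}$. Then for every $\epsilon>0$, $n^{\rm asy}(\epsilon,1)=n^{\rm ent}(\epsilon,1)$, and for $d\ge2$ $$n^{\rm asy}(\epsilon,d)=\sum_{l_1=2}^{i_d(\epsilon^2)}\ \sum_{l_2=l_1+1}^{i_{d-1}(\epsilon^2/\lambda_{l_1-1})}\cdots\sum_{l_{d-1}=l_{d-2}+1}^{i_2(\epsilon^2/[\lambda_{l_1-1}\cdots\lambda_{l_{d-2}-1}])}\Big[n^{\rm ent}\big(\epsilon/\sqrt{\lambda_{l_1-1}\cdots\lambda_{l_{d-1}-1}},1\big)-l_{d-1}+1\Big],$$ with empty sums equal to zero.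
   Context: Here $\lambda=(\lambda_m)$ are the squared singular values of a compact linear operator $S_1:H_1\to G_1$, and $n^{\rm asy}(\epsilon,d)$ is the information complexity (absolute error, worst case) of $S_1^{\otimes d}$ restricted to the fully antisymmetric subspace of $H_1^{\otimes d}$ (i.e. $I_d=\{1,\dots,d\}$), and $n^{\rm ent}(\delta,1)$ that of $S_1$ itself. *)

(* Defs.v *)
From Stdlib Require Import Reals Lra Lia ZArith List Sorted Classical ClassicalEpsilon.
Import ListNotations.
Open Scope R_scope.

(* Sequences lambda : nat -> R are indexed from 1 (lambda 0 is unused); N = {1,2,...}. *)

(* Cardinality of a (finite) set of elements: the n such that P is enumerated
   by a duplicate-free list of length n (arbitrary if P is infinite). *)
Definition is_card {A : Type} (P : A -> Prop) (n : nat) : Prop :=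
  exists l : list A, NoDup l /\ (forall x, In x l <-> P x) /\ length l = n.

Definition card {A : Type} (P : A -> Prop) : nat :=
  epsilon (inhabits 0%nat) (fun n => is_card P n).

(* Minimum of a set of naturals (arbitrary if empty). *)
Definition nat_min (P : nat -> Prop) : nat :=
  epsilon (inhabits 0%nat) (fun i => P i /\ forall j, P j -> (i <= j)%nat).

Definition prodR (lam : nat -> R) (i d : nat) : R :=
  fold_right Rmult 1 (map lam (seq i d)).

Definition idx (lam : nat -> R) (d : nat) (t : R) : nat :=
  nat_min (fun i => (1 <= i)%nat /\ prodR lam i d <= t).

Definition n_ent (lam : nat -> R) (delta : R) : nat :=
  card (fun m : nat => (1 <= m)%nat /\ lam m > delta ^ 2).

Definition prod_list (lam : nat -> R) (k : list nat) : R :=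
  fold_right (fun m acc => lam m * acc) 1 k.

Definition n_asy (lam : nat -> R) (eps : R) (d : nat) : nat :=
  card (fun k : list nat =>
          length k = d /\ Forall (fun x => (1 <= x)%nat) k /\ Sorted lt k /\
          prod_list lam k > eps ^ 2).

(* sum_{l=a}^{b} f l in Z (empty, i.e. 0, if b < a) *)
Definition zsum (a b : nat) (f : nat -> Z) : Z :=
  fold_right (fun l acc => (f l + acc)%Z) 0%Z (seq a (S b - a)).

(* Nested sum. nest k lo P, with r = k+2 the remaining "dimension" and
   P = lambda_{l_1-1} ... lambda_{l_{j-1}-1} the product so far:
   nest 0 lo P = sum_{l=lo}^{i_2(eps^2/P)} [ n^ent(eps/sqrt(P*lambda_{l-1}),1) - l + 1 ]
   nest (k+1) lo P = sum_{l=lo}^{i_{k+3}(eps^2/P)} nest k (l+1) (P*lambda_{l-1}). *)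
Fixpoint nest (lam : nat -> R) (eps : R) (k lo : nat) (P : R) : Z :=
  match k with
  | O => zsum lo (idx lam 2 (eps ^ 2 / P))
           (fun l => (Z.of_nat (n_ent lam (eps / sqrt (P * lam (l - 1)%nat)))
                      - Z.of_nat l + 1)%Z)
  | S k' => zsum lo (idx lam (k' + 3) (eps ^ 2 / P))
           (fun l => nest lam eps k' (l + 1) (P * lam (l - 1)%nat))
  end.

(* Main.v *)
Require Import Defs.
From Stdlib Require Import Reals ZArith List.
From Stdlib Require Import Sorted Arith Lia Lra Wf_nat Classical ClassicalEpsilon.
Import ListNotations.
Open Scope R_scope.
Lemma card_eq {A} (P : A -> Prop) n : is_card P n -> card P = n.
Proof.
  intros H. unfold card.
  assert (H2 : is_card P (epsilon (inhabits 0%nat) (fun n => is_card P n)))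
    by (apply epsilon_spec; eauto).
  destruct H as [l1 [N1 [M1 L1]]]. destruct H2 as [l2 [N2 [M2 L2]]].
  rewrite <- L1, <- L2. apply Nat.le_antisymm; apply NoDup_incl_length; auto;
  intros x Hx; [apply M1, M2 | apply M2, M1]; auto.
Qed.

Lemma is_card_ext {A} (P Q : A -> Prop) n :
  (forall x, P x <-> Q x) -> is_card P n -> is_card Q n.
Proof.
  intros E [l [N [M L]]]. exists l; repeat split; auto; intros Hx; [apply E, M | apply M, E]; auto.
Qed.

Lemma is_card_list {A} (l : list A) : NoDup l -> is_card (fun x => In x l) (length l).
Proof. intros; exists l; repeat split; auto. Qed.

Lemma is_card_cons {A} (c : A) P n :
  is_card P n -> is_card (fun y => exists x, y = c :: x /\ P x) n.
Proof.
  intros [l [N [M L]]]. exists (map (cons c) l). repeat split.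
  - apply NoDup_map_NoDup_ForallPairs; auto. intros u v _ _ E; inversion E; auto.
  - intros Hy. apply in_map_iff in Hy. destruct Hy as [z [<- Hz]]. exists z; split; auto; apply M; auto.
  - intros [z [-> Hz]]. apply in_map. apply M; auto.
  - rewrite length_map; auto.
Qed.

Lemma is_card_union {A} (P Q : A -> Prop) n m :
  is_card P n -> is_card Q m -> (forall x, P x -> Q x -> False) ->
  is_card (fun x => P x \/ Q x) (n + m).
Proof.
  intros [l1 [N1 [M1 L1]]] [l2 [N2 [M2 L2]]] D. exists (l1 ++ l2). repeat split.
  - apply NoDup_app; auto. intros a H1 H2. apply (D a); [apply M1|apply M2]; auto.
  - intros H. apply in_app_or in H. destruct H; [left; apply M1|right; apply M2]; auto.
  - intros [H|H]; apply in_or_app; [left; apply M1|right; apply M2]; auto.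
  - rewrite length_app; lia.
Qed.

Lemma union_card {A} (L : list nat) (Q : nat -> A -> Prop) (f : nat -> Z) :
  NoDup L ->
  (forall l, In l L -> (0 <= f l)%Z /\ is_card (Q l) (Z.to_nat (f l))) ->
  (forall l l' x, In l L -> In l' L -> Q l x -> Q l' x -> l = l') ->
  (0 <= fold_right (fun l acc => (f l + acc)%Z) 0%Z L)%Z /\
  is_card (fun x => exists l, In l L /\ Q l x)
          (Z.to_nat (fold_right (fun l acc => (f l + acc)%Z) 0%Z L)).
Proof.
  induction L as [|a L IH]; intros ND H D.
  - simpl. split; [lia|]. exists []. repeat split; simpl; auto.
    + constructor.
    + intros [].
    + intros [l [[] _]].
  - inversion ND; subst. destruct (H a (or_introl eq_refl)) as [Ha Ca].
    destruct IH as [IH1 IH2]; auto.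
    { intros; apply H; right; auto. }
    { intros; eapply D; eauto; right; auto. }
    simpl. split; [lia|]. rewrite Z2Nat.inj_add; auto.
    eapply is_card_ext; [|apply (is_card_union _ _ _ _ Ca IH2)].
    + intros x; split.
      * intros [Hx|[l [Hl Hx]]]; [exists a|exists l]; simpl; auto.
      * intros [l [[<-|Hl] Hx]]; [left|right; exists l]; auto.
    + intros x Hx [l [Hl Hx']]. assert (a = l) by (eapply D; simpl; eauto).
      subst; contradiction.
Qed.
Definition Hp (lam : nat -> R) := forall m, (1 <= m)%nat -> 0 < lam m.
Definition Hd (lam : nat -> R) := forall m, (1 <= m)%nat -> lam (S m) <= lam m.

Lemma lam_mono lam : Hd lam -> forall m n, (1 <= m <= n)%nat -> lam n <= lam m.
Proof.
  intros H m n Hmn. induction n as [|n IH]; [lia|].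
  destruct (Nat.eq_dec m (S n)) as [->|Hne]; [lra|].
  specialize (H n ltac:(lia)). specialize (IH ltac:(lia)). lra.
Qed.

Lemma prodR_S lam a n : prodR lam a (S n) = lam a * prodR lam (S a) n.
Proof. reflexivity. Qed.

Lemma prodR_pos lam : Hp lam -> forall n a, (1 <= a)%nat -> 0 < prodR lam a n.
Proof.
  intros H n; induction n; intros a Ha.
  - unfold prodR; simpl; lra.
  - rewrite prodR_S. apply Rmult_lt_0_compat; [apply H; auto| apply IHn; lia].
Qed.

Lemma prod_list_pos lam : Hp lam -> forall r, Forall (fun x => (1 <= x)%nat) r -> 0 < prod_list lam r.
Proof.
  intros H r; induction r; intros F; simpl; [lra|]. inversion F; subst.
  apply Rmult_lt_0_compat; auto.
Qed.

Lemma lt_trans' : Relations_1.Transitive lt.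
Proof. intros x y z; lia. Qed.

Lemma prod_list_le lam : Hp lam -> Hd lam -> forall r a, (1 <= a)%nat -> Sorted lt r ->
  Forall (fun x => (a <= x)%nat) r -> prod_list lam r <= prodR lam a (length r).
Proof.
  intros Hp0 Hd0 r; induction r as [|x r IH]; intros a Ha Hs F.
  - unfold prodR; simpl; lra.
  - simpl length. rewrite prodR_S. simpl. inversion F; subst.
    apply Rmult_le_compat.
    + left; apply Hp0; lia.
    + left; apply prod_list_pos; auto. apply Sorted_extends in Hs; [|apply lt_trans'].
      eapply Forall_impl; [|exact Hs]; simpl; intros; lia.
    + apply lam_mono; auto.
    + apply IH; [lia| eapply Sorted_inv; eauto|]. apply Sorted_extends in Hs; [|apply lt_trans'].
      eapply Forall_impl; [|exact Hs]; simpl; intros; lia.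
Qed.

Lemma prod_list_seq lam a n : prod_list lam (seq a n) = prodR lam a n.
Proof. revert a; induction n; intros a; [reflexivity|]. simpl. rewrite IHn. reflexivity. Qed.

Lemma Sorted_seq a n : Sorted lt (seq a n).
Proof.
  revert a; induction n; intros a; simpl; constructor; auto.
  destruct n; simpl; constructor; lia.
Qed.

Lemma prodR_mono lam : Hp lam -> Hd lam -> forall a b n, (1 <= a <= b)%nat ->
  prodR lam b n <= prodR lam a n.
Proof.
  intros. rewrite <- prod_list_seq. rewrite <- (length_seq n b) at 2.
  apply prod_list_le; auto; [lia|apply Sorted_seq|].
  apply Forall_forall. intros x Hx; apply in_seq in Hx; lia.
Qed.

Lemma prefix lam : Hd lam -> Un_cv lam 0 -> forall s, 0 < s ->
  exists N, forall m, ((1 <= m)%nat /\ lam m > s) <-> (1 <= m <= N)%nat.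
Proof.
  intros Hd0 Hl s Hs. destruct (Hl s Hs) as [M HM].
  assert (HM' : forall m, (M <= m)%nat -> (1 <= m)%nat -> ~ lam m > s).
  { intros m Hm _. specialize (HM m Hm). unfold R_dist in HM. rewrite Rminus_0_r in HM.
    apply Rabs_def2 in HM. lra. }
  clear HM. induction M as [|M IH].
  - exists 0%nat. intros m; split; [intros [H1 H]; exfalso; apply (HM' m); [lia|auto|auto]|lia].
  - destruct (classic ((1 <= M)%nat /\ lam M > s)) as [[H1 H2]|Hn].
    + exists M. intros m; split.
      * intros [Hm1 Hm2]. split; auto. destruct (le_lt_dec m M); auto.
        exfalso; apply (HM' m); [lia|auto|auto].
      * intros Hm. split; [lia|]. assert (lam M <= lam m) by (apply lam_mono; auto; lia). lra.
    + apply IH. intros m Hm Hm1. destruct (Nat.eq_dec m M) as [->|]; [|apply HM'; auto; lia].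
      intros Hc. apply Hn. split; auto.
Qed.

Lemma nat_min_spec (P : nat -> Prop) : (exists n, P n) ->
  P (nat_min P) /\ forall j, P j -> (nat_min P <= j)%nat.
Proof.
  intros Hex. unfold nat_min. apply epsilon_spec.
  assert (H := dec_inh_nat_subset_has_unique_least_element P (fun n => classic (P n)) Hex).
  destruct H as [x [Hx _]]. exists x; exact Hx.
Qed.

Lemma idx_spec lam : Hp lam -> Hd lam -> Un_cv lam 0 -> forall d t, 0 < t -> (1 <= d)%nat ->
  (1 <= idx lam d t)%nat /\ prodR lam (idx lam d t) d <= t /\
  forall j, (1 <= j)%nat -> prodR lam j d <= t -> (idx lam d t <= j)%nat.
Proof.
  intros Hp0 Hd0 Hl d t Ht Hd1. destruct d as [|d']; [lia|].
  assert (Hex : exists i, (1 <= i)%nat /\ prodR lam i (S d') <= t).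
  { set (C := prodR lam 1 d').
    assert (HC : 0 < C) by (apply prodR_pos; auto).
    destruct (Hl (t / C)) as [M HM]. { apply Rdiv_lt_0_compat; auto. }
    exists (Nat.max M 1). split; [lia|].
    specialize (HM (Nat.max M 1) ltac:(lia)). unfold R_dist in HM. rewrite Rminus_0_r in HM.
    apply Rabs_def2 in HM. destruct HM as [HM _].
    rewrite prodR_S.
    assert (prodR lam (S (Nat.max M 1)) d' <= C) by (apply prodR_mono; auto; lia).
    assert (0 < lam (Nat.max M 1)) by (apply Hp0; lia).
    apply Rle_trans with (lam (Nat.max M 1) * C).
    + apply Rmult_le_compat_l; lra.
    + apply Rmult_lt_compat_r with (r := C) in HM; auto.
      unfold Rdiv in HM. rewrite Rmult_assoc, Rinv_l in HM; lra. }
  destruct (nat_min_spec _ Hex) as [[H1 H2] H3].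
  unfold idx. split; [auto|split; [auto|]]. intros j Hj Hjt. apply H3; auto.
Qed.

Definition SS (lam : nat -> R) (d a : nat) (t : R) (k : list nat) : Prop :=
  length k = d /\ Forall (fun x => (a <= x)%nat) k /\ Sorted lt k /\ prod_list lam k > t.

Lemma decomp lam : Hp lam -> forall d a t x, (1 <= a)%nat ->
  SS lam (S d) a t x <-> exists l, (a + 1 <= l)%nat /\
     exists r, x = (l - 1)%nat :: r /\ SS lam d l (t / lam (l - 1)%nat) r.
Proof.
  intros Hp0 d a t x Ha. split.
  - intros [L [F [So P]]]. destruct x as [|k1 r]; [discriminate|].
    inversion F; subst. exists (S k1). split; [lia|]. exists r.
    replace (S k1 - 1)%nat with k1 by lia. split; auto.
    assert (Hk : 0 < lam k1) by (apply Hp0; lia).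
    split; [simpl in L; lia|]. split.
    { apply Sorted_extends in So; [|apply lt_trans'].
      eapply Forall_impl; [|exact So]; simpl; intros; lia. }
    split; [eapply Sorted_inv; eauto|].
    simpl in P. unfold Rdiv. apply Rmult_lt_reg_l with (lam k1); auto.
    rewrite <- Rmult_assoc, (Rmult_comm _ t), Rmult_assoc, Rinv_r; lra.
  - intros [l [Hl [r [-> [L [F [So P]]]]]]].
    assert (Hk : 0 < lam (l - 1)%nat) by (apply Hp0; lia).
    split; [simpl; lia|]. split.
    { constructor; [lia|]. eapply Forall_impl; [|exact F]; simpl; intros; lia. }
    split.
    { constructor; auto. destruct r; constructor. inversion F; lia. }
    simpl. apply Rmult_lt_compat_l with (r := lam (l-1)%nat) in P; auto.
    unfold Rdiv in P. rewrite (Rmult_comm t), <- Rmult_assoc, Rinv_r, Rmult_1_l in P; lra.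
Qed.

Lemma beyond lam : Hp lam -> Hd lam -> forall d i l t r, (1 <= i)%nat -> (i <= l - 1)%nat ->
  prodR lam i (S d) <= t -> ~ SS lam d l (t / lam (l - 1)%nat) r.
Proof.
  intros Hp0 Hd0 d i l t r Hi Hil Hpt [L [F [So P]]].
  assert (Hk : 0 < lam (l - 1)%nat) by (apply Hp0; lia).
  assert (H1 : prod_list lam r <= prodR lam l d) by (rewrite <- L; apply prod_list_le; auto; lia).
  assert (H2 : prodR lam (l - 1) (S d) <= prodR lam i (S d)) by (apply prodR_mono; auto; lia).
  rewrite prodR_S in H2. replace (S (l - 1)) with l in H2 by lia.
  apply Rmult_lt_compat_l with (r := lam (l-1)%nat) in P; auto.
  unfold Rdiv in P. rewrite (Rmult_comm t), <- Rmult_assoc, Rinv_r, Rmult_1_l in P; [|lra].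
  apply Rmult_le_compat_l with (r := lam (l-1)%nat) in H1; lra.
Qed.
Lemma base_card lam a s N : (1 <= a)%nat ->
  (forall m, ((1 <= m)%nat /\ lam m > s) <-> (1 <= m <= N)%nat) ->
  is_card (SS lam 1 a s) (N + 1 - a).
Proof.
  intros Ha HN. rewrite <- (length_seq (N + 1 - a) a).
  rewrite <- (length_map (fun m => [m])).
  eapply is_card_ext; [|apply is_card_list].
  - intros x. rewrite in_map_iff. split.
    + intros [m [<- Hm]]. apply in_seq in Hm.
      destruct (proj2 (HN m) ltac:(lia)) as [_ Hl].
      split; [reflexivity|]. split; [constructor; [lia|constructor]|].
      split; [repeat constructor|]. simpl; lra.
    + intros [L [F [So P]]]. destruct x as [|m [|]]; try discriminate.
      exists m; split; auto. inversion F; subst. simpl in P.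
      destruct (proj1 (HN m) ltac:(split; [lia|lra])). apply in_seq; lia.
  - apply NoDup_map_NoDup_ForallPairs; [|apply seq_NoDup].
    intros u v _ _ E; inversion E; auto.
Qed.

Lemma ent_card lam d N :
  (forall m, ((1 <= m)%nat /\ lam m > d ^ 2) <-> (1 <= m <= N)%nat) ->
  n_ent lam d = N.
Proof.
  intros HN. unfold n_ent. apply card_eq. rewrite <- (length_seq N 1).
  eapply is_card_ext; [|apply is_card_list, seq_NoDup].
  intros m. rewrite in_seq. rewrite HN. lia.
Qed.

Lemma step lam : Hp lam -> Hd lam -> forall d lo t b (f : nat -> Z),
  (2 <= lo)%nat -> (1 <= b)%nat -> prodR lam b (S d) <= t ->
  (forall l, In l (seq lo (S b - lo)) ->
     (0 <= f l)%Z /\ is_card (SS lam d l (t / lam (l - 1)%nat)) (Z.to_nat (f l))) ->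
  (0 <= zsum lo b f)%Z /\ is_card (SS lam (S d) (lo - 1) t) (Z.to_nat (zsum lo b f)).
Proof.
  intros Hp0 Hd0 d lo t b f Hlo Hb Hbt H.
  destruct (union_card (seq lo (S b - lo))
     (fun l x => exists r, x = (l - 1)%nat :: r /\ SS lam d l (t / lam (l - 1)%nat) r) f)
     as [U1 U2].
  - apply seq_NoDup.
  - intros l Hl. destruct (H l Hl) as [H1 H2]. split; auto. apply is_card_cons; auto.
  - intros l l' x Hl Hl' [r [-> _]] [r' [E _]]. apply in_seq in Hl, Hl'. inversion E; lia.
  - unfold zsum. split; auto. eapply is_card_ext; [|exact U2].
    intros x. rewrite (decomp lam Hp0 d (lo - 1) t x ltac:(lia)). split.
    + intros [l [Hl Q]]. apply in_seq in Hl. exists l; split; [lia|auto].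
    + intros [l [Hl [r [-> Hr]]]]. exists l. split; [|exists r; auto].
      apply in_seq. destruct (le_lt_dec l b); [lia|].
      exfalso. eapply (beyond lam Hp0 Hd0 d b l t r); eauto; lia.
Qed.

Lemma claim lam : Hp lam -> Hd lam -> Un_cv lam 0 -> forall eps, 0 < eps ->
  forall k lo P, (2 <= lo)%nat -> 0 < P ->
  (0 <= nest lam eps k lo P)%Z /\
  is_card (SS lam (k + 2) (lo - 1) (eps ^ 2 / P)) (Z.to_nat (nest lam eps k lo P)).
Proof.
  intros Hp0 Hd0 Hl eps Heps k. induction k as [|k IH]; intros lo P Hlo HP.
  - assert (Ht : 0 < eps ^ 2 / P) by (apply Rdiv_lt_0_compat; auto; apply pow_lt; auto).
    destruct (idx_spec lam Hp0 Hd0 Hl 2 (eps ^ 2 / P) Ht ltac:(lia)) as [I1 [I2 I3]].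
    cbn [nest]. simpl (0 + 2)%nat.
    apply step; auto.
    intros l Hl0. apply in_seq in Hl0.
    assert (Hk : 0 < lam (l - 1)%nat) by (apply Hp0; lia).
    set (s := eps ^ 2 / P / lam (l - 1)%nat).
    assert (Hs : 0 < s) by (apply Rdiv_lt_0_compat; auto).
    destruct (prefix lam Hd0 Hl s Hs) as [N HN].
    assert (HE : n_ent lam (eps / sqrt (P * lam (l - 1)%nat)) = N).
    { apply ent_card. intros m. rewrite <- HN.
      assert (Hq : 0 < P * lam (l - 1)%nat) by (apply Rmult_lt_0_compat; auto).
      assert (Hsq : sqrt (P * lam (l - 1)%nat) * sqrt (P * lam (l - 1)%nat) = P * lam (l - 1)%nat)
        by (apply sqrt_sqrt; lra).
      assert (Hsq2 : 0 < sqrt (P * lam (l - 1)%nat)) by (apply sqrt_lt_R0; auto).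
      replace ((eps / sqrt (P * lam (l - 1)%nat)) ^ 2) with s; [tauto|].
      replace ((eps / sqrt (P * lam (l - 1)%nat)) ^ 2) with
        (eps ^ 2 / (sqrt (P * lam (l - 1)%nat) * sqrt (P * lam (l - 1)%nat))) by (field; lra).
      rewrite Hsq. unfold s. field; lra. }
    assert (HNl : (l <= N)%nat).
    { destruct (le_lt_dec l N); auto. exfalso.
      assert (Hnot : ~ prodR lam (l - 1) 2 <= eps ^ 2 / P). { intro C. specialize (I3 (l - 1)%nat ltac:(lia) C). lia. }
      apply Hnot. rewrite prodR_S, prodR_S. replace (S (l - 1)) with l by lia.
      unfold prodR; simpl.
      assert (~ lam l > s). { intro C. assert (Hq := proj1 (HN l) (conj (ltac:(lia) : (1 <= l)%nat) C)). lia. }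
      unfold s in *. apply Rnot_gt_le in H.
      apply Rmult_le_compat_l with (r := lam (l-1)%nat) in H; [|lra].
      replace (lam (l - 1)%nat * (eps ^ 2 / P / lam (l - 1)%nat)) with (eps ^ 2 / P) in H by (field; lra). simpl pow in H. lra. }
    cbv beta. rewrite HE.
    replace (Z.of_nat N - Z.of_nat l + 1)%Z with (Z.of_nat (N + 1 - l)) by lia.
    rewrite Nat2Z.id. split; [lia|]. apply base_card; [lia|]. exact HN.
  - assert (Ht : 0 < eps ^ 2 / P) by (apply Rdiv_lt_0_compat; auto; apply pow_lt; auto).
    destruct (idx_spec lam Hp0 Hd0 Hl (k + 3) (eps ^ 2 / P) Ht ltac:(lia)) as [I1 [I2 I3]].
    cbn [nest]. replace (S k + 2)%nat with (S (k + 2)) by lia.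
    apply step; auto.
    { replace (S (k + 2)) with (k + 3)%nat by lia; auto. }
    intros l Hl0. apply in_seq in Hl0.
    assert (Hk : 0 < lam (l - 1)%nat) by (apply Hp0; lia).
    destruct (IH (l + 1)%nat (P * lam (l - 1)%nat) ltac:(lia) ltac:(apply Rmult_lt_0_compat; auto))
      as [J1 J2].
    split; auto. replace (l + 1 - 1)%nat with l in J2 by lia.
    replace (eps ^ 2 / (P * lam (l - 1)%nat)) with (eps ^ 2 / P / lam (l - 1)%nat) in J2; auto.
    field; lra.
Qed.

Theorem proposition8 (lam : nat -> R)
  (Hpos : forall m, (1 <= m)%nat -> 0 < lam m)
  (Hdec : forall m, (1 <= m)%nat -> lam (S m) <= lam m)
  (Hlim : Un_cv lam 0) :
  forall eps : R, 0 < eps ->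
    n_asy lam eps 1 = n_ent lam eps /\
    (forall d : nat, (2 <= d)%nat ->
       Z.of_nat (n_asy lam eps d) = nest lam eps (d - 2) 2 1).
Proof.
  intros eps Heps. split.
  - assert (He : 0 < eps ^ 2) by (apply pow_lt; auto).
    destruct (prefix lam Hdec Hlim _ He) as [N HN].
    rewrite (ent_card lam eps N HN). unfold n_asy. apply card_eq.
    replace N with (N + 1 - 1)%nat by lia. apply (base_card lam 1 (eps ^ 2) N); auto.
  - intros d Hd2. destruct (claim lam Hpos Hdec Hlim eps Heps (d - 2) 2 1 ltac:(lia) ltac:(lra))
      as [C1 C2].
    replace (d - 2 + 2)%nat with d in C2 by lia.
    replace (eps ^ 2 / 1) with (eps ^ 2) in C2 by field.
    unfold n_asy. replace (2 - 1)%nat with 1%nat in C2 by lia. unfold SS in C2. rewrite (card_eq _ _ C2). apply Z2Nat.id; auto.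
Qed.
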